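(* Let $p$ be an integer with $p\leq-1$ or $p\geq2$, and let $r\geq1$ be an integer. For $p\leq -1$ define \[ b^{-}_{K_p,r}=-\frac{1}{r^2}\sum_{d\mid r}\mu\!\left(\tfrac{r}{d}\right)\binom{3d-1}{d-1},\qquad b^{+}_{K_p,r}=\frac{1}{r^2}\sum_{d\mid r}\mu\!\left(\tfrac{r}{d}\right)\binom{(2|p|+1)d-1}{d-1}, \] and for $p\geq2$ define \[ b^{-}_{K_p,r}=-\frac{1}{r^2}\sum_{d\mid r}\mu\!\left(\tfrac{r}{d}\right)(-1)^{d+1}\binom{2d-1}{d-1},\qquad b^{+}_{K_p,r}=\frac{1}{r^2}\sum_{d\mid r}\mu\!\left(\tfrac{r}{d}\right)(-1)^{d}\binom{(2p+2)d-1}{d-1}. \] Then $b^{-}_{K_p,r}$ and $b^{+}_{K_p,r}$ are integers.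
   Context: $\mu$ is the Möbius function and the sums run over positive divisors $d$ of $r$. (These are the extremal BPS invariants of the twist knots $K_p$ found by Garoufalidis–Kucharski–Sułkowski.) *)

(* Defs.v *)
From mathcomp Require Import all_boot all_order all_algebra.
Set Implicit Arguments. Unset Strict Implicit. Unset Printing Implicit Defensive.
Import Order.TTheory GRing.Theory Num.Theory.
Local Open Scope ring_scope.

Definition moebius (n : nat) : int :=
  if (0 < n)%N && all (fun p => logn p n == 1%N) (primes n)
  then (-1) ^+ size (primes n) else 0.

(* Extremal BPS invariants of twist knots K_p, valued in rat.
   Case p <= -1 and case p >= 2 follow the paper; for p in {0,1} the
   value is irrelevant (set by the p >= 2 formula, never used). *)
Definition b_minus (p : int) (r : nat) : rat :=
  if p <= -1 then
    - (r%:R ^+ 2)^-1 * \sum_(d <- divisors r)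
        ((moebius (r %/ d))%:~R * ('C(3 * d - 1, d - 1))%:R)
  else
    - (r%:R ^+ 2)^-1 * \sum_(d <- divisors r)
        ((moebius (r %/ d))%:~R * (-1) ^+ d.+1 * ('C(2 * d - 1, d - 1))%:R).

Definition b_plus (p : int) (r : nat) : rat :=
  if p <= -1 then
    (r%:R ^+ 2)^-1 * \sum_(d <- divisors r)
        ((moebius (r %/ d))%:~R * ('C((2 * `|p| + 1) * d - 1, d - 1))%:R)
  else
    (r%:R ^+ 2)^-1 * \sum_(d <- divisors r)
        ((moebius (r %/ d))%:~R * (-1) ^+ d * ('C((2 * `|p| + 2) * d - 1, d - 1))%:R).

(* Main.v *)
Require Import Defs.
From mathcomp Require Import all_boot all_order all_algebra.
From mathcomp Require Import zify ring lra.
Import Order.TTheory GRing.Theory Num.Theory.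
Local Open Scope ring_scope.
Open Scope nat_scope.

Lemma prod_dvd_part (F : nat -> nat) p n : 0 < p ->
  \prod_(1 <= i < n.+1 * p | p %| i) F i = \prod_(1 <= j < n.+1) F (p * j).
Proof.
move=> p0; elim: n => [|n IH].
  rewrite mul1n [RHS]big_geq // big_nat_cond big1 // => i /andP[/andP[i1 ip] pi].
  by move: (dvdn_leq i1 pi); rewrite leqNgt ip.
rewrite (big_cat_nat _ (n := n.+1 * p)) //=; last first.
  by rewrite leq_mul2r leqnSn orbT.
  by rewrite muln_gt0 p0.
rewrite IH [RHS]big_nat_recr //=.
have -> : n.+2 * p = n.+1 * p + p by rewrite [n.+2 * p]mulSnr.
congr (_ * _).
rewrite big_ltn_cond; last by rewrite -[X in X < _]addn0 ltn_add2l.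
rewrite dvdn_mull // [p * _]mulnC big_nat_cond big1 ?muln1 // => i /andP[/andP[i1 i2] pi].
move: pi; rewrite -(subnK (ltnW i1)) dvdn_addl ?dvdn_mull // => pi.
have: 0 < i - n.+1 * p by rewrite subn_gt0.
move=> h; move: (dvdn_leq h pi); lia.
Qed.

Lemma prod_split (F : nat -> nat) p n : 0 < p ->
  \prod_(1 <= i < n.+1 * p) F i =
  \prod_(1 <= j < n.+1) F (p * j) * \prod_(1 <= i < n.+1 * p | ~~ (p %| i)) F i.
Proof.
by move=> p0; rewrite (bigID (fun i => p %| i)) /= prod_dvd_part.
Qed.

Lemma bin_prod N M : 0 < M ->
  'C(N - 1, M - 1) * \prod_(1 <= i < M) i = \prod_(1 <= i < M) (N - i).
Proof.
move=> M0.
have -> : \prod_(1 <= i < M) i = (M - 1)`!.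
  by rewrite fact_prod subn1 prednK.
rewrite bin_ffact ffact_prod.
rewrite (_ : \prod_(1 <= i < M) (N - i) = \prod_(0 + 1 <= i < M) (N - i)) //.
rewrite big_addn big_mkord.
apply: eq_bigr => i _; rewrite -subnDA; congr (_ - _); lia.
Qed.

Lemma bin_ident A p n : 0 < A -> 0 < p ->
  'C(A * (n.+1 * p) - 1, n.+1 * p - 1) * \prod_(1 <= i < n.+1 * p | ~~ (p %| i)) i
  = 'C(A * n.+1 - 1, n.+1 - 1) * \prod_(1 <= i < n.+1 * p | ~~ (p %| i)) (A * (n.+1 * p) - i).
Proof.
move=> A0 p0.
have y0 : 0 < n.+1 * p by rewrite muln_gt0 p0.
have h1 := @bin_prod (A * (n.+1 * p)) _ y0.
rewrite !prod_split // in h1.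
have h2 := @bin_prod (A * n.+1) _ (ltn0Sn n).
have e1 : \prod_(1 <= j < n.+1) (A * (n.+1 * p) - p * j)
   = \prod_(1 <= j < n.+1) p * \prod_(1 <= j < n.+1) (A * n.+1 - j).
  rewrite -big_split /=; apply: eq_bigr => j _.
  by rewrite mulnBr; congr (_ - _); ring.
have e2 : \prod_(1 <= j < n.+1) (p * j)
   = \prod_(1 <= j < n.+1) p * \prod_(1 <= j < n.+1) j.

  by rewrite -big_split.
rewrite e1 e2 -h2 in h1.
set X := \prod_(1 <= j < n.+1) p in h1.
set Y := \prod_(1 <= j < n.+1) j in h1.
have XY : 0 < X * Y.
  by rewrite muln_gt0 prodn_gt0 // /Y -fact_prod fact_gt0.
apply/eqP; rewrite -(eqn_pmul2l XY); apply/eqP.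
move: h1; set Cb := 'C(_, _); set Cs := 'C(_, _).
set P := \prod_(_ <= i < _ | _) i; set Q := \prod_(_ <= i < _ | _) _.
move=> h1.
transitivity (Cb * (X * Y * P)); first ring.
rewrite h1; ring.
Qed.

Lemma iota_pair y : 0 < y ->
  perm_eq (index_iota 1 y)
    (iota 1 ((y - 1) %/ 2) ++ map (fun i => y - i) (iota 1 ((y - 1) %/ 2))
       ++ (if odd y then [::] else [:: y %/ 2])).
Proof.
move=> y0; set h := (y - 1) %/ 2.
have ey : y = (y %/ 2) * 2 + odd y by rewrite -modn2 -divn_eq.
have hle : forall i, i \in iota 1 h -> 1 <= i <= h.
  by move=> i; rewrite mem_iota; lia.
apply: uniq_perm.
- by rewrite /index_iota iota_uniq.
- rewrite cat_uniq iota_uniq /=; apply/andP; split.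
  + apply/hasPn => z; rewrite mem_cat => /orP[/mapP[i /hle Hi ->]|].
      by rewrite mem_iota; move: Hi ey; rewrite /h; case: (odd y) => /=; lia.
    by move: ey; case: (odd y) => //= ey; rewrite inE => /eqP ->; rewrite mem_iota /h; apply/negP => /andP[]; lia.
  + rewrite cat_uniq; apply/and3P; split.
    * rewrite map_inj_in_uniq ?iota_uniq // => i j /hle Hi /hle Hj.
      move: ey; rewrite /h; case: (odd y) => /=; lia.
    * case E : (odd y) => //=; rewrite orbF; apply/mapP => -[i /hle Hi].
      by move: ey; rewrite /h E /=; lia.
    * by case: (odd y).
- move=> z; rewrite mem_index_iota !mem_cat mem_iota.
  apply/idP/idP.
  + move=> Hz.
    case: (leqP z h) => Hzh; first by apply/orP; left; lia.
    apply/orP; right; apply/orP.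
    case E : (odd y); last case: (z =P y %/ 2) => [-> | Hne].
    * left; apply/mapP; exists (y - z); last by lia.
      by rewrite mem_iota; move: ey; rewrite /h E /=; lia.
    * by right; rewrite inE.
    * left; apply/mapP; exists (y - z); last by lia.
      by rewrite mem_iota; move: ey Hne; rewrite /h E /=; lia.
  + case/orP; first by move: ey; rewrite /h; case: (odd y) => /=; lia.
    case/orP; first by case/mapP => i /hle Hi ->; move: ey; rewrite /h; case: (odd y) => /=; lia.
    by move: ey; case: (odd y) => //= ey; rewrite inE => /eqP ->; lia.
Qed.

Lemma prod_pair (G : nat -> nat) (Pr : pred nat) y : 0 < y ->
  (forall i, 0 < i < y -> Pr (y - i) = Pr i) ->
  \prod_(1 <= i < y | Pr i) G i =
  \prod_(i <- iota 1 ((y - 1) %/ 2) | Pr i) (G i * G (y - i)) *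
  (if odd y then 1 else if Pr (y %/ 2) then G (y %/ 2) else 1).
Proof.
move=> y0 HP; rewrite (perm_big _ (@iota_pair y y0)) !big_cat big_map /= mulnA.
congr (_ * _).
  rewrite big_split /=; congr (_ * _).
  rewrite big_seq_cond [RHS]big_seq_cond; apply: eq_bigl => i.
  case Hi : (i \in iota 1 ((y - 1) %/ 2)) => //=.
  rewrite HP //; move: Hi; rewrite mem_iota; lia.
by case: (odd y); rewrite ?big_nil ?big_cons ?big_nil //; case: (Pr _); rewrite ?muln1.
Qed.

Lemma pair_cong A p y : 0 < A -> p %| y -> 0 < y ->
  \prod_(1 <= i < y | ~~ (p %| i)) (A * y - i) =
  (if ~~ odd y && ~~ (p %| y %/ 2) then 2 * A - 1 else 1) *
  \prod_(1 <= i < y | ~~ (p %| i)) i %[mod y ^ 2].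
Proof.
move=> A0 py y0.
have HP : forall i, 0 < i < y -> ~~ (p %| y - i) = ~~ (p %| i).
  by move=> i /andP[_ iy]; rewrite dvdn_subr // ltnW.
rewrite (@prod_pair (fun i => A * y - i) (fun i => ~~ (p %| i)) y) //.
rewrite (@prod_pair (fun i => i) (fun i => ~~ (p %| i)) y) //.
have [B AB] : exists B, A = B.+1 by exists A.-1; rewrite prednK.
have cg : \prod_(i <- iota 1 ((y - 1) %/ 2) | ~~ (p %| i)) ((A * y - i) * (A * y - (y - i)))
   = \prod_(i <- iota 1 ((y - 1) %/ 2) | ~~ (p %| i)) (i * (y - i)) %[mod y ^ 2].
  rewrite big_seq_cond [X in _ = X %[mod _]]big_seq_cond.
  apply: (big_ind2 (fun a b => a = b %[mod y ^ 2])) => //.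
    by move=> a1 b1 a2 b2 e1 e2; rewrite -modnMm e1 e2 modnMm.
  move=> i /andP[Hi _]; move: Hi; rewrite mem_iota => Hi.
  have e1 : A * y - i = B * y + (y - i) by rewrite AB mulSn; lia.
  have e2 : A * y - (y - i) = B * y + i by rewrite AB mulSn; lia.
  rewrite e1 e2.
  set j := y - i.
  have yij : y = i + j by rewrite /j; lia.
  have -> : (B * y + j) * (B * y + i) = (B * (B + 1)) * y ^ 2 + i * j.
    by rewrite yij; ring.
  by rewrite modnMDl.
rewrite -modnMml cg modnMml.
case E : (odd y) => /=; first by rewrite !muln1 mul1n.
case: (p %| y %/ 2) => /=; first by rewrite mul1n.
have ey : y = (y %/ 2) * 2 by rewrite {1}(divn_eq y 2) modn2 E addn0.
congr (_ %% _); rewrite mulnCA; congr (_ * _).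
rewrite mulnBl mul1n; congr (_ - _); rewrite {1}ey; ring.
Qed.

Local Open Scope ring_scope.

Definition sg (A d : nat) : int := if odd A then 1 else (-1) ^+ d.
Definition fA (A d : nat) : int := sg A d * ('C(A * d - 1, d - 1))%:Z.

Lemma coprime_P p y : prime p ->
  coprime p (\prod_(1 <= i < y | ~~ (p %| i)%N) i).
Proof.
move=> pp; apply: (big_ind (fun x => coprime p x)); first exact: coprimen1.
  by move=> a b ha hb; rewrite coprimeMr ha hb.
by move=> i hi; rewrite prime_coprime.
Qed.

Lemma natmod_dvdz (a b d : nat) : (a = b %[mod d])%N -> ((d : int) %| (a : int) - (b : int))%Z.
Proof. by move=> e; rewrite -eqz_mod_dvd !modz_nat e. Qed.

Lemma core_cong A p n y c : (0 < A)%N -> prime p -> y = (n.+1 * p)%N ->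
  c = (if ~~ odd y && ~~ (p %| y %/ 2)%N then (2 * A - 1)%N else 1%N) ->
  (((y ^ 2)%N : int) %| (('C(A * y - 1, y - 1))%:Z - (c * 'C(A * n.+1 - 1, n.+1 - 1))%N%:Z)
     * (\prod_(1 <= i < y | ~~ (p %| i)%N) i)%N%:Z)%Z.
Proof.
move=> A0 pp Hy Hc.
have p0 : (0 < p)%N by rewrite prime_gt0.
have y0 : (0 < y)%N by rewrite Hy muln_gt0 p0.
have e := @bin_ident A p n A0 p0.
have h : (p %| y)%N by rewrite Hy dvdn_mull.
have h2 := @pair_cong A p y A0 h y0.
rewrite mulrBl -!PoszM; apply: natmod_dvdz.
rewrite -Hy in e h2; rewrite e -modnMmr h2 modnMmr -Hc.
by rewrite !mulnA [(_ * c)%N]mulnC.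
Qed.

Lemma cong A p m k : (0 < A)%N -> prime p -> (0 < m)%N -> (0 < k)%N ->
  (((p ^ (2 * k))%N : int) %| fA A (m * p ^ k) - fA A (m * p ^ k.-1))%Z.
Proof.
move=> A0 pp m0 k0.
have p0 : (0 < p)%N by rewrite prime_gt0.
have n0 : (0 < m * p ^ k.-1)%N by rewrite muln_gt0 m0 expn_gt0 p0.
set n := (m * p ^ k.-1)%N in n0 *.
have [n' En] : exists n', n = n'.+1 by exists n.-1; rewrite prednK.
set y := (m * p ^ k)%N.
have Hy : y = (n'.+1 * p)%N by rewrite -En /y /n -mulnA -expnSr prednK.
set c := (if ~~ odd y && ~~ (p %| y %/ 2)%N then (2 * A - 1)%N else 1%N).
have D0 := @core_cong A p n' y c A0 pp Hy erefl.
have Dpk : (((p ^ (2 * k))%N : int) %| ((y ^ 2)%N : int))%Z.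
  by rewrite dvdzE /= /y expnMn -expnM mulnC dvdn_mull.
have D : (((p ^ (2 * k))%N : int) %|
   ('C(A * y - 1, y - 1))%:Z - (c * 'C(A * n'.+1 - 1, n'.+1 - 1))%N%:Z)%Z.
  rewrite -(@Gauss_dvdzl _ _ (\prod_(1 <= i < y | ~~ (p %| i)%N) i)%N%:Z).
    exact: dvdz_trans Dpk D0.
  by rewrite coprimezE /= coprimeXl // coprime_P.
move: D; rewrite /fA -/n En -/y.
set Cb := 'C(_, _); set Cs := 'C(_, _).
rewrite /c; case: ifP => [/andP[oy py2] | cnd].
  have p2 : p = 2%N.
    case: (even_prime pp) => // po; exfalso.
    move: oy; rewrite Hy oddM po andbT => on.
    have en : n'.+1 = (n'.+1./2 * 2)%N by rewrite -{1}(odd_double_half n'.+1) (negbTE on) add0n muln2.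
    move: py2; rewrite Hy en -mulnA [(2 * p)%N]mulnC mulnA mulnK // dvdn_mull //.
  subst p.
  have y2 : (y %/ 2)%N = n'.+1 by rewrite Hy mulnK.
  move: py2; rewrite y2 dvdn2 negbK => on.
  have k1 : k.-1 = 0%N.
    case Ek: k.-1 => [//|k']; exfalso.
    by move: on; rewrite -En /n Ek expnS mulnCA oddM.
  have -> : (2 * k = 2)%N by move: k1 k0; clear; case: k => // [[|]].
  have sy : sg A y = 1.
    by rewrite /sg; case: (odd A) => //; rewrite -signr_odd (negbTE oy).
  rewrite sy mul1r /sg -signr_odd on.
  have [a Ha] : exists a, A = (a * 2 + odd A)%N.
    by exists A./2; rewrite -{1}(odd_double_half A) addnC muln2.
  case oA: (odd A) Ha => /= Ha; rewrite ?mul1r ?expr1 ?mulN1r ?opprK => D.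
    have -> : (Cb%:Z - Cs%:Z) = (Cb%:Z - ((2 * A - 1) * Cs)%N%:Z) + ((4 * a) * Cs)%N%:Z.
      have -> : ((2 * A - 1) * Cs = (4 * a) * Cs + Cs)%N.
        by rewrite -{3}(mul1n Cs) -mulnDl; congr (_ * _)%N; lia.
      by rewrite PoszD; ring.
    by rewrite rpredD // PoszM dvdz_mulr // dvdzE /= dvdn_mulr.
  have -> : (Cb%:Z + Cs%:Z) = (Cb%:Z - ((2 * A - 1) * Cs)%N%:Z) + ((4 * a) * Cs)%N%:Z.
    have -> : ((4 * a) * Cs = (2 * A - 1) * Cs + Cs)%N.
      by rewrite -{3}(mul1n Cs) -mulnDl; congr (_ * _)%N; lia.
    by rewrite PoszD; ring.
  by rewrite rpredD // PoszM dvdz_mulr // dvdzE /= dvdn_mulr.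
have sy : sg A y = sg A n'.+1.
  rewrite /sg; case: (odd A) => //; rewrite -signr_odd -[RHS]signr_odd.
  congr (_ ^+ (nat_of_bool _)); rewrite Hy oddM.
  case: (even_prime pp) => [p2 | ->]; last by rewrite andbT.
  subst p; rewrite andbF; move: cnd; rewrite Hy oddM andbF /= mulnK // dvdn2 negbK.
  by move=> /= ->.
by rewrite sy -mulrBr mul1n => D; apply: dvdz_mull.
Qed.

Lemma moeb0 p n : prime p -> (p ^ 2 %| n)%N -> moebius n = 0.
Proof.
move=> pp hd; rewrite /moebius.
case: (posnP n) => [-> //| n0].
have hl : (2 <= logn p n)%N by rewrite -pfactor_dvdn.
have : ~~ all (fun q => logn q n == 1%N) (primes n).
  apply/allPn; exists p.
    by rewrite -logn_gt0; lia.
  by apply/negP => /eqP e; rewrite e in hl.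
by move/negbTE => ->; rewrite andbF.
Qed.

Lemma moebM p x : prime p -> (0 < x)%N -> ~~ (p %| x)%N ->
  moebius (x * p) = - moebius x.
Proof.
move=> pp x0 px.
have p0 : (0 < p)%N by rewrite prime_gt0.
have pe : perm_eq (primes (x * p)) (p :: primes x).
  apply: uniq_perm; first exact: primes_uniq.
    by rewrite /= primes_uniq andbT mem_primes pp x0 px.
  move=> q; rewrite primesM // in_cons orbC; congr (_ || _).
  by rewrite primes_prime // inE.
rewrite /moebius (perm_size pe) (perm_all _ pe) /= muln_gt0 x0 p0 /=.
rewrite lognM // (logn_prime _ pp) eqxx logn_coprime ?prime_coprime //=.
rewrite (@eq_in_all _ _ (fun q => logn q x == 1%N)); last first.
  move=> q qx; have qp : (q == p) = false.
    by apply/eqP => e; move: qx; rewrite e mem_primes (negbTE px) !andbF.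
  by rewrite lognM // (logn_prime q pp) qp addn0.
case: (all (fun q => logn q x == 1%N) (primes x)); last by rewrite oppr0.
by rewrite exprS mulN1r.
Qed.

Lemma mob_p (f : nat -> int) r p : (0 < r)%N -> prime p -> (0 < logn p r)%N ->
  (forall m k, (0 < m)%N -> (0 < k)%N ->
     (((p ^ (2 * k))%N : int) %| f (m * p ^ k)%N - f (m * p ^ k.-1)%N)%Z) ->
  (((p ^ (2 * logn p r))%N : int) %| \sum_(d <- divisors r) moebius (r %/ d) * f d)%Z.
Proof.
move=> r0 pp k0 H; set k := logn p r in k0 *.
have p0 : (0 < p)%N by rewrite prime_gt0.
have divP : forall d, d \in divisors r -> (d %| r)%N && (0 < d)%N.
  by move=> d; rewrite -dvdn_divisors // => dr; rewrite dr (dvdn_gt0 r0 dr).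
have logle : forall d, d \in divisors r -> (logn p d <= k)%N.
  by move=> d /divP/andP[dr _]; apply: dvdn_leq_log.
rewrite (bigID (fun d => logn p d == k)) /=.
have eB : \sum_(d <- divisors r | logn p d != k) moebius (r %/ d) * f d
        = \sum_(d <- divisors r | logn p d == k.-1) moebius (r %/ d) * f d.
  rewrite (bigID (fun d => logn p d == k.-1)) /= [X in _ + X]big1_seq ?addr0.
    apply: eq_bigl => d; case: (logn p d =P k.-1) => [->|_]; last by rewrite andbF.
    by rewrite andbT; apply/eqP; lia.
  move=> d /andP[/andP[h1 h2] dd]; apply/eqP; rewrite mulf_eq0; apply/orP; left; apply/eqP.
  have /andP[dr d0] := divP d dd.
  apply: (@moeb0 p); rewrite // pfactor_dvdn //; last by rewrite divn_gt0 // dvdn_leq.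
  rewrite logn_div //; move: (logle d dd) h1 h2; rewrite -/k; lia.
have pe : perm_eq [seq d <- divisors r | logn p d == k]
                  [seq d * p | d <- [seq d <- divisors r | logn p d == k.-1]]%N.
  apply: uniq_perm; first by rewrite filter_uniq // divisors_uniq.
    rewrite map_inj_uniq ?filter_uniq ?divisors_uniq //.
    by move=> a b /eqP; rewrite eqn_pmul2r // => /eqP.
  move=> z; rewrite mem_filter; apply/idP/idP.
    move=> /andP[/eqP lz zd]; have /andP[zr z0] := divP z zd.
    have : (0 < logn p z)%N by rewrite lz.
    rewrite logn_gt0 mem_primes => /and3P[_ _ pz].
    apply/mapP; exists (z %/ p)%N; last by rewrite divnK.
    rewrite mem_filter logn_div // lz (logn_prime _ pp) eqxx subn1 eqxx /=.
    rewrite -dvdn_divisors //; apply: dvdn_trans zr.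
    by rewrite -{2}(divnK pz) dvdn_mulr.
  case/mapP => d; rewrite mem_filter => /andP[/eqP ld dd] ->.
  have /andP[dr d0] := divP d dd.
  rewrite lognM // (logn_prime _ pp) eqxx ld.
  apply/andP; split; first by apply/eqP; lia.
  rewrite -dvdn_divisors // mulnC -dvdn_divRL //.
  have : (0 < logn p (r %/ d)%N)%N by rewrite logn_div // ld -/k; lia.
  by rewrite logn_gt0 mem_primes => /and3P[_ _ ->].
have eA : \sum_(d <- divisors r | logn p d == k) moebius (r %/ d) * f d
        = \sum_(d <- divisors r | logn p d == k.-1) moebius (r %/ (d * p)) * f (d * p)%N.
  by rewrite -big_filter (perm_big _ pe) big_map big_filter.
rewrite eA eB -big_split /= big_seq_cond.
apply: rpred_sum => d /andP[dd /eqP ld].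
have /andP[dr d0] := divP d dd.
have pr : (p %| r %/ d)%N.
  have : (0 < logn p (r %/ d)%N)%N by rewrite logn_div // ld -/k; lia.
  by rewrite logn_gt0 mem_primes => /and3P[_ _ ->].
have dpr : (d * p %| r)%N by rewrite mulnC -dvdn_divRL.
set x := (r %/ (d * p))%N.
have rx : r = (x * (d * p))%N by rewrite divnK.
have x0 : (0 < x)%N by rewrite divn_gt0 ?muln_gt0 ?d0 ?p0 // dvdn_leq.
have px : ~~ (p %| x)%N.
  apply/negP => pxx.
  have : (0 < logn p x)%N by rewrite logn_gt0 mem_primes pp x0 pxx.
  rewrite /x logn_div // lognM // (logn_prime _ pp) eqxx ld -/k; lia.
have rd : (r %/ d = x * p)%N by rewrite {1}rx mulnA mulnAC mulnK.
rewrite rd moebM // mulNr -mulrBr; apply: dvdz_mull.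
set m := (d %/ p ^ k.-1)%N.
have hd : d = (m * p ^ k.-1)%N by rewrite divnK // pfactor_dvdn // ld.
have hdp : (d * p = m * p ^ k)%N by rewrite {1}hd -mulnA -expnSr prednK.
have m0 : (0 < m)%N by rewrite divn_gt0 ?expn_gt0 ?p0 // dvdn_leq // pfactor_dvdn // ld.
by have := H m k m0 k0; rewrite -hdp -hd.
Qed.

Lemma mob_div (f : nat -> int) r : (0 < r)%N ->
  (forall p m k, prime p -> (0 < m)%N -> (0 < k)%N ->
     (((p ^ (2 * k))%N : int) %| f (m * p ^ k)%N - f (m * p ^ k.-1)%N)%Z) ->
  (((r ^ 2)%N : int) %| \sum_(d <- divisors r) moebius (r %/ d) * f d)%Z.
Proof.
move=> r0 H; rewrite dvdzE /=; apply/dvdn_partP; first by rewrite expn_gt0 r0.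
move=> p; rewrite mem_primes => /and3P[pp _ pr2].
rewrite p_part lognX.
have lg : (0 < logn p r)%N.
  by move: pr2; rewrite logn_gt0 mem_primes pp r0 Euclid_dvdX // andbT.
by have := @mob_p f r p r0 pp lg (fun m k => H p m k pp); rewrite dvdzE [(_ * logn p r)%N]mulnC.
Qed.

Lemma key A r : (0 < A)%N -> (0 < r)%N ->
  (r%:R ^+ 2 : rat)^-1 * ((\sum_(d <- divisors r) moebius (r %/ d) * fA A d) : int)%:~R
    \is a Num.int.
Proof.
move=> A0 r0.
have D := @mob_div (fA A) r r0 (fun p m k pp m0 k0 => @cong A p m k A0 pp m0 k0).
case/dvdzP: D => q ->.
rewrite intrM -pmulrn natrX [_%:~R * _]mulrC mulKf ?intr_int //.
by rewrite expf_neq0 // pnatr_eq0 -lt0n.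
Qed.

Lemma sum_cast A r :
  ((\sum_(d <- divisors r) moebius (r %/ d) * fA A d) : int)%:~R
  = \sum_(d <- divisors r) ((moebius (r %/ d))%:~R * ((sg A d)%:~R * ('C(A * d - 1, d - 1))%:R)) :> rat.
Proof.
rewrite rmorph_sum; apply: eq_bigr => d _.
by rewrite /fA /= !rmorphM /= -pmulrn.
Qed.

Theorem theorem6p1 (p : int) (r : nat) :
  (p <= -1 \/ 2 <= p) -> (1 <= r)%N ->
  b_minus p r \is a Num.int /\ b_plus p r \is a Num.int.
Proof.
move=> hp r0.
have [pn|pn] := boolP (p <= -1).
  rewrite /b_minus /b_plus pn; split.
    rewrite mulNr rpredN.
    have := @key 3 r isT r0; rewrite sum_cast.
    move=> h; apply: (@eq_ind _ _ (fun z => z \is a Num.int) h); congr (_ * _); apply: eq_bigr => d _.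
    by rewrite /sg /= mul1r.
  have A0 : (0 < 2 * `|p| + 1)%N by rewrite addn1.
  have := @key _ r A0 r0; rewrite sum_cast.
  move=> h; apply: (@eq_ind _ _ (fun z => z \is a Num.int) h); congr (_ * _); apply: eq_bigr => d _.
  by rewrite /sg oddD oddM /= mul1r.
rewrite /b_minus /b_plus (negbTE pn); split.
  rewrite mulNr rpredN.
  have := @key 2 r isT r0; rewrite sum_cast -rpredN -mulrN -sumrN.
  move=> h; apply: (@eq_ind _ _ (fun z => z \is a Num.int) h); congr (_ * _); apply: eq_bigr => d _.
  by rewrite /sg /= rmorphXn rmorphN1 exprS mulN1r mulrN mulNr opprK mulrA.
have A0 : (0 < 2 * `|p| + 2)%N by rewrite addn2.
have := @key _ r A0 r0; rewrite sum_cast.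
move=> h; apply: (@eq_ind _ _ (fun z => z \is a Num.int) h); congr (_ * _); apply: eq_bigr => d _.
by rewrite /sg oddD oddM /= rmorphXn rmorphN1 mulrA.
Qed.
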